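(* Let $D$ be a delta-matroid on $[n,\overline{n}]$ with feasible sets $\mathcal{F}$, let $S\in\operatorname{AdS}_n$ with $|S|=n$, and let $r=\max_{B\in\mathcal{F}}|S\cap B|$. Let $M$ be the matroid on $S$ whose set of bases is $\{S\cap B:B\in\mathcal{F},\ |S\cap B|=r\}$. Then for every $T\subseteq S$, $$\operatorname{rk}_M(T)=\frac{g_D(T)+|T|}{2}.$$
   Context: Let $[n,\overline{n}]=\{1,\dots,n,\overline{1},\dots,\overline{n}\}$ with involution $a\mapsto\overline{a}$; $\overline{S}=\{\overline{a}:a\in S\}$. A subset is admissible if it contains at most one of $i,\overline{i}$ for each $i$; $\operatorname{AdS}_n$ is the set of admissible subsets. In $\mathbb{R}^n$ set $e_{\overline{i}}=-e_i$, $e_S=\sum_{a\in S}e_a$. A delta-matroid $D$ on $[n,\overline{n}]$ is a nonempty collection $\mathcal{F}$ of admissible sets of size $n$ (feasible sets) such that $\operatorname{Conv}\{e_B:B\in\mathcal{F}\}$ has all edges parallel to some $e_i$ or $e_i\pm e_j$. Its rank function is $g_D(S)=\max_{B\in\mathcal{F}}(|S\cap B|-|\overline{S}\cap B|)$. (It is a known fact that the collection $\{S\cap B:B\in\mathcal{F},|S\cap B|=r\}$ is the set of bases of a matroid on $S$.) $\operatorname{rk}_M$ denotes the matroid rank function. *)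

(* Defs.v *)
From HB Require Import structures.
From mathcomp Require Import all_boot all_order all_algebra.
Set Implicit Arguments. Unset Strict Implicit. Unset Printing Implicit Defensive.
Import Order.TTheory GRing.Theory Num.Theory.
Local Open Scope ring_scope.

(* Ground set [n, nbar]: (i, false) encodes i, (i, true) encodes ibar. *)
Definition elt (n : nat) := ('I_n * bool)%type.
Definition bar {n : nat} (a : elt n) : elt n := (a.1, ~~ a.2).
Definition barset {n : nat} (S : {set elt n}) : {set elt n} := [set bar a | a in S].

Definition admissible {n : nat} (S : {set elt n}) : bool :=
  [forall i : 'I_n, ~~ (((i, false) \in S) && ((i, true) \in S))].

Definition e_elt {R : numDomainType} {n : nat} (a : elt n) : 'I_n -> R :=
  fun j => if j == a.1 then (if a.2 then -1 else 1) else 0.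
Definition e_set {R : numDomainType} {n : nat} (S : {set elt n}) : 'I_n -> R :=
  fun j => \sum_(a in S) e_elt a j.

Definition dotv {R : numDomainType} {n : nat} (w x : 'I_n -> R) : R :=
  \sum_(j < n) w j * x j.

Definition unitv {R : numDomainType} {n : nat} (i : 'I_n) : 'I_n -> R :=
  fun j => if j == i then 1 else 0.

Definition good_direction {R : numDomainType} {n : nat} (d : 'I_n -> R) : Prop :=
  exists2 c : R, c != 0 &
    ((exists i : 'I_n, forall j, d j = c * unitv i j) \/
     (exists i k : 'I_n, i != k /\
        ((forall j, d j = c * (unitv i j + unitv k j)) \/
         (forall j, d j = c * (unitv i j - unitv k j))))).

(* [e_B1, e_B2] is an edge of Conv{e_B : B in F}: some linear functional w is
   maximized over the vertex set exactly at e_B1 and e_B2 (all e_B are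
   vertices, being distinct points of {-1,1}^n). *)
Definition is_edge {R : numDomainType} {n : nat} (F : {set {set elt n}})
    (B1 B2 : {set elt n}) : Prop :=
  [/\ B1 \in F, B2 \in F, B1 != B2 &
    exists w : 'I_n -> R,
      [/\ dotv w (e_set B1) = dotv w (e_set B2),
          forall B, B \in F -> dotv w (e_set B) <= dotv w (e_set B1) &
          forall B, B \in F -> dotv w (e_set B) = dotv w (e_set B1) ->
            B = B1 \/ B = B2]].

Definition delta_matroid {R : numDomainType} {n : nat} (F : {set {set elt n}}) : Prop :=
  [/\ F != set0,
      forall B, B \in F -> admissible B /\ #|B| = n &
      forall B1 B2, @is_edge R n F B1 B2 ->
        good_direction (fun j => e_set B1 j - e_set B2 j : R)].

(* Rank function g_D(S) = max_{B in F} (|S cap B| - |Sbar cap B|).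
   The neutral element -n is a lower bound of all terms (|B| = n for feasible
   B), so for nonempty F this is the true maximum. *)
Definition gD {n : nat} (F : {set {set elt n}}) (S : {set elt n}) : int :=
  \big[Num.max/ - (n%:Z)]_(B in F) ((#|S :&: B|)%:Z - (#|barset S :&: B|)%:Z).

Definition rS {n : nat} (F : {set {set elt n}}) (S : {set elt n}) : nat :=
  \max_(B in F) #|S :&: B|.

Definition basesM {n : nat} (F : {set {set elt n}}) (S : {set elt n})
    : {set {set elt n}} :=
  [set S :&: B | B in F & #|S :&: B| == rS F S].

Definition rkM {n : nat} (F : {set {set elt n}}) (S T : {set elt n}) : nat :=
  \max_(X in basesM F S) #|T :&: X|.

(* Main.v *)
Require Import Defs.
From HB Require Import structures.
From mathcomp Require Import all_boot all_order all_algebra.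
From mathcomp Require Import zify ring lra.
Set Implicit Arguments. Unset Strict Implicit. Unset Printing Implicit Defensive.
Import Order.TTheory GRing.Theory Num.Theory.
Local Open Scope ring_scope.


Section Comb.
Variable n : nat.
Implicit Types (A B X T S : {set elt n}).

Lemma adm_not_both B i : admissible B -> (i,false) \in B -> (i,true) \in B -> False.
Proof. by move=> /forallP /(_ i) /negP H h1 h2; apply: H; rewrite h1 h2. Qed.

Lemma full_mem B i : admissible B -> #|B| = n ->
  ((i,true) \in B) = ~~ ((i,false) \in B).
Proof.
move=> adm cB.
case f: ((i,false) \in B); case t: ((i,true) \in B) => //=.
  by exfalso; exact: (adm_not_both adm f t).
exfalso.
have inj : {in B &, injective (fun a : elt n => a.1)}.
  move=> [a1 b1] [a2 b2] h1 h2 /= e; subst a2.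
  by case: b1 b2 h1 h2 => [] [] // h1 h2; exfalso; exact: (adm_not_both adm h2 h1) || exact: (adm_not_both adm h1 h2).
have: (#|[set a.1 | a in B]| <= #|[set~ i]|)%N.
  apply: subset_leq_card; apply/subsetP => x /imsetP [[a b] ab ->] /=.
  rewrite !inE; apply/eqP => ai; subst a.
  by case: b ab; rewrite ?t ?f.
rewrite card_in_imset // cB cardsC1 card_ord.
have := ltn_ord i; lia.
Qed.

Lemma barK : involutive (@bar n).
Proof. by case=> i b; rewrite /bar /= negbK. Qed.

Lemma bar_mem B a : admissible B -> #|B| = n -> (bar a \in B) = (a \notin B).
Proof.
move=> adm cB; case: a => i [] /=; rewrite /bar /=.
  by rewrite (full_mem i adm cB) negbK.
by rewrite (full_mem i adm cB).
Qed.

Lemma mem_barset T x : (x \in barset T) = (bar x \in T).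
Proof.
apply/imsetP/idP => [[a aT ->]|h]; first by rewrite barK.
by exists (bar x); rewrite ?barK.
Qed.

Lemma card_barI T B : admissible B -> #|B| = n ->
  #|barset T :&: B| = (#|T| - #|T :&: B|)%N.
Proof.
move=> adm cB.
have -> : barset T :&: B = barset (T :\: B).
  apply/setP => x; rewrite inE !mem_barset !inE (bar_mem _ adm cB).
  by rewrite negbK andbC.
by rewrite card_imset ?cardsD //; apply: (can_inj barK).
Qed.

End Comb.



Section Dot.
Variable R : realFieldType.
Variable n : nat.
Implicit Types (A B X T S : {set elt n}).

Lemma e_set_val X j : @e_set R n X j =
  ((j,false) \in X)%:R - ((j,true) \in X)%:R.
Proof.
rewrite /e_set big_mkcond /=.
transitivity (\sum_i \sum_b (if (i,b) \in X then @e_elt R n (i,b) j else 0)).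
  by rewrite pair_big /=; apply: eq_bigr => -[i b] _.
rewrite (bigD1 j) //= [X in _ + X]big1 ?addr0 => [|i ij].
  rewrite big_bool /e_elt /= eqxx.
  by case: ((j,true) \in X); case: ((j,false) \in X) => /=; ring.
apply: big1 => b _; rewrite /e_elt /= eq_sym (negbTE ij).
by case: ((i,b) \in X).
Qed.

Lemma e_full B j : admissible B -> #|B| = n ->
  @e_set R n B j = if (j,false) \in B then 1 else -1.
Proof.
move=> adm cB; rewrite e_set_val (full_mem j adm cB).
by case: ((j,false) \in B); rewrite /= ?subr0 ?sub0r.
Qed.

Lemma dotvDl (w1 w2 x : 'I_n -> R) :
  dotv (fun j => w1 j + w2 j) x = dotv w1 x + dotv w2 x.
Proof. by rewrite /dotv -big_split; apply: eq_bigr => j _; rewrite mulrDl. Qed.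

Lemma dotvZl (a : R) (w x : 'I_n -> R) :
  dotv (fun j => a * w j) x = a * dotv w x.
Proof. by rewrite /dotv mulr_sumr; apply: eq_bigr => j _; rewrite mulrA. Qed.

Lemma dotvC (w x : 'I_n -> R) : dotv w x = dotv x w.
Proof. by rewrite /dotv; apply: eq_bigr => j _; rewrite mulrC. Qed.

Lemma dotvBr (w x y : 'I_n -> R) :
  dotv w (fun j => x j - y j) = dotv w x - dotv w y.
Proof. by rewrite /dotv -sumrB; apply: eq_bigr => j _; rewrite mulrBr. Qed.

Lemma dot_full X B : admissible B -> #|B| = n ->
  dotv (@e_set R n X) (e_set B) = 2 * (#|X :&: B|)%:R - (#|X|)%:R.
Proof.
move=> adm cB.
rewrite /dotv.
under eq_bigr => j _ do rewrite /e_set mulr_suml.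
rewrite exchange_big /=.
have step : forall a : elt n, \sum_j @e_elt R n a j * @e_set R n B j =
   if a \in B then 1 else -1.
  move=> [i b]; rewrite (bigD1 i) //= big1 ?addr0 => [|k ki]; last first.
    by rewrite /e_elt /= (negbTE ki) mul0r.
  rewrite /e_elt /= eqxx (e_full _ adm cB).
  case: b; last by case: ((i,false) \in B); rewrite mul1r.
  by rewrite (full_mem i adm cB); case: ((i,false) \in B); rewrite /= ?mulN1r ?opprK ?mulr1.
under eq_bigr => a _ do rewrite step.
rewrite (big_setID B) /=.
rewrite (eq_bigr (fun _ => 1)) => [|a]; last by rewrite inE => /andP[_ ->].
rewrite [X in _ + X](eq_bigr (fun _ => -1)) => [|a]; last by rewrite !inE => /andP[/negbTE -> _].
rewrite !sumr_const cardsD mulNrn.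
have le : (#|X :&: B| <= #|X|)%N by apply: subset_leq_card; apply: subsetIl.
rewrite -[1 *+ (#|X| - _)%N]/((#|X| - _)%N%:R) natrB //.
ring.
Qed.

End Dot.



Lemma sum_lemma (R : realFieldType) n (y z : 'I_n -> R) i k :
 (forall j, z j = 0 \/ z j = y j) -> (forall j, y j = 0 \/ y j = 2 \/ y j = -2) ->
 (forall j, j != i -> j != k -> y j = 0) -> \sum_j y j < 0 -> \sum_j z j <= 0.
Proof.
move=> hz hy hs hlt.
suff yle : forall j, y j <= 0.
  by apply: sumr_le0 => j _; case: (hz j) => ->; [done | exact: yle].
move=> j; case: (hy j) => [->|[h2|->]] //; last by lra.
exfalso.
have key : forall o, (forall l, l != j -> l != o -> y l = 0) -> y j - 2 <= \sum_l y l.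
  move=> o ho; rewrite (bigD1 j) //=.
  case: (eqVneq o j) => [eoj|noj].
    rewrite big1 ?addr0; first by lra.
    by move=> l lj; apply: ho => //; rewrite eoj.
  rewrite (bigD1 o) //= big1 ?addr0.
    have : -2 <= y o by case: (hy o) => [->|[->|->]]; lra.
    lra.
  by move=> l /andP[lj lo]; exact: ho.
case: (eqVneq j i) => [eji|nji].
  have := key k; subst j.
  move=> /(_ (fun l a b => hs l a b)); lra.
case: (eqVneq j k) => [ejk|njk]; last by move: (hs j nji njk); lra.
have := key i; subst j.
move=> /(_ (fun l a b => hs l b a)); lra.
Qed.

Lemma eT_cases (R : realFieldType) n (S T : {set elt n}) j : admissible S -> T \subset S ->
  @e_set R n T j = 0 \/ @e_set R n T j = @e_set R n S j.
Proof.
move=> admS TS; rewrite !e_set_val.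
case tf: ((j,false) \in T).
  have sf : (j,false) \in S by apply: (subsetP TS).
  have st : (j,true) \in S = false by apply/negP => st; exact: (adm_not_both admS sf st).
  have tt : (j,true) \in T = false by apply/negP => /(subsetP TS); rewrite st.
  by right; rewrite sf st tt.
case tt: ((j,true) \in T).
  have st : (j,true) \in S by apply: (subsetP TS).
  have sf : (j,false) \in S = false by apply/negP => sf; exact: (adm_not_both admS sf st).
  by right; rewrite sf st.
by left; rewrite /=; ring.
Qed.

Lemma edge_lemma (R : realFieldType) n (S T B1 B2 : {set elt n}) :
 admissible S -> #|S| = n -> T \subset S ->
 admissible B1 -> #|B1| = n -> admissible B2 -> #|B2| = n ->
 good_direction (fun j => e_set B1 j - e_set B2 j : R) ->
 dotv (e_set S) (e_set B1) < dotv (e_set S) (@e_set R n B2) ->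
 dotv (e_set T) (e_set B1) <= dotv (e_set T) (@e_set R n B2).
Proof.
move=> admS cS TS a1 c1 a2 c2 [c c0 hd] hlt.
have [i [k supp]] : exists i k, forall j, j != i -> j != k ->
    (@e_set R n B1 j - e_set B2 j) = 0.
  case: hd => [[i hi]|[i [k [_ [h|h]]]]].
  - by exists i, i => j ji _; rewrite hi /unitv (negbTE ji) mulr0.
  - by exists i, k => j ji jk; rewrite h /unitv (negbTE ji) (negbTE jk) addr0 mulr0.
  - by exists i, k => j ji jk; rewrite h /unitv (negbTE ji) (negbTE jk) subr0 mulr0.
rewrite -subr_le0 -dotvBr.
move: hlt; rewrite -subr_lt0 -dotvBr => hlt.
apply: (@sum_lemma R n (fun j => e_set S j * (e_set B1 j - e_set B2 j))
   _ i k) => //.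
- move=> j /=; case: (eT_cases R j admS TS) => ->; [left; exact: mul0r | by right].
- move=> j /=; rewrite (e_full _ _ admS cS) (e_full _ _ a1 c1) (e_full _ _ a2 c2).
  case: ((j,false) \in S); case: ((j,false) \in B1); case: ((j,false) \in B2);
  rewrite /=; first [left; ring | right; left; ring | right; right; ring].
- by move=> j ji jk /=; rewrite supp // mulr0.
Qed.



Section LI.
Variable R : realFieldType.
Variable n : nat.
Variable F : {set {set elt n}}.
Hypothesis hF : forall B, B \in F -> admissible B /\ #|B| = n.
Local Notation E B := (@e_set R n B).
Definition pp B1 B2 : R := dotv (E B1) (E B2).

Lemma pp_val B1 B2 : B1 \in F -> B2 \in F ->
  pp B1 B2 = 2 * (#|B1 :&: B2|)%:R - n%:R.
Proof.
move=> /hF [a1 c1] /hF [a2 c2]; by rewrite /pp dot_full // c1.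
Qed.

Lemma pp_refl B : B \in F -> pp B B = n%:R.
Proof. move=> BF; rewrite pp_val // setIid (proj2 (hF BF)); ring. Qed.

Lemma pp_sym B1 B2 : pp B1 B2 = pp B2 B1.
Proof. exact: dotvC. Qed.

Lemma pp_bounds B1 B2 : B1 \in F -> B2 \in F -> - n%:R <= pp B1 B2 <= n%:R.
Proof.
move=> h1 h2; rewrite pp_val //.
have : (#|B1 :&: B2| <= n)%N.
  by apply: (leq_trans (subset_leq_card (subsetIl B1 B2))); rewrite (proj2 (hF h1)).
rewrite -(ler_nat R) => h.
have : 0 <= (#|B1 :&: B2|)%:R :> R by apply: ler0n.
move: h; set k := (#|B1 :&: B2|)%:R => h h0.
apply/andP; split; lra.
Qed.

Lemma pp_lt B1 B2 : B1 \in F -> B2 \in F -> B1 != B2 -> pp B1 B2 < n%:R.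
Proof.
move=> h1 h2 ne; rewrite pp_val //.
have [a1 c1] := hF h1; have [a2 c2] := hF h2.
have : (#|B1 :&: B2| < n)%N.
  rewrite ltn_neqAle; apply/andP; split; last first.
    by apply: (leq_trans (subset_leq_card (subsetIl B1 B2))); rewrite c1.
  apply/negP => /eqP e.
  have sub : B1 \subset B2.
    apply/setIidPl/eqP; rewrite eqEcard subsetIl /=.
    by rewrite e c1.
  by move/negP: ne; apply; rewrite eqEcard sub c1 c2 /= leqnn.
move=> hk; have : (#|B1 :&: B2|)%:R < n%:R :> R by rewrite ltr_nat.
set k := (#|B1 :&: B2|)%:R => h.
lra.
Qed.

Lemma LI v (c : 'I_n -> R) : v \in F ->
  (exists2 u, u \in F & dotv c (E v) < dotv c (E u)) ->
  exists2 u, @is_edge R n F v u & dotv c (E v) < dotv c (E u).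
Proof.
move=> vF [u1 u1F lt1].
pose A u := n%:R - pp v u.
pose Bc u := dotv c (E u) - dotv c (E v).
pose P u := (u \in F) && (0 < Bc u).
have P1 : P u1 by rewrite /P u1F subr_gt0.
have Apos : forall u, u \in F -> u != v -> 0 < A u.
  by move=> u uF uv; rewrite /A subr_gt0; apply: pp_lt => //; rewrite eq_sym.
case: (@arg_maxP _ R _ u1 P (fun u => Bc u / A u) P1) => um /andP[umF Bum] maxum.
have umv : um != v.
  by apply/eqP => e; move: Bum; rewrite e /Bc subrr ltxx.
set rho := Bc um / A um.
have Aum := Apos um umF umv.
have rpos : 0 < rho by apply: divr_gt0.
pose W1 := fun j => E v j + rho^-1 * c j.
pose f x := dotv W1 (E x).
have fE : forall x, f x = pp v x + rho^-1 * dotv c (E x).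
  by move=> x; rewrite /f /W1 dotvDl dotvZl.
have fdiff : forall x, f x - f v = - A x + rho^-1 * Bc x.
  by move=> x; rewrite !fE pp_refl // /A /Bc; ring.
have neg : forall x, Bc x <= 0 -> rho^-1 * Bc x <= 0.
  by move=> x hB; apply: mulr_ge0_le0 => //; rewrite invr_ge0 ltW.
have le1 : forall x, x \in F -> f x <= f v.
  move=> x xF; rewrite -subr_le0 fdiff.
  case: (eqVneq x v) => [->|xv].
    by rewrite /A /Bc pp_refl // !subrr mulr0 oppr0 addr0.
  have Ax := Apos x xF xv.
  case: (ltrP 0 (Bc x)) => hB.
    have : Bc x / A x <= rho by apply: maxum; rewrite /P xF hB.
    rewrite ler_pdivrMr // => h.
    have : rho^-1 * Bc x <= A x.
      by rewrite mulrC ler_pdivrMr // mulrC.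
    lra.
  have := neg x hB; lra.
have eq1 : forall x, x \in F -> x != v -> f x = f v -> 0 < Bc x.
  move=> x xF xv e; rewrite ltNge; apply/negP => hB.
  have Ax := Apos x xF xv; have := neg x hB.
  have : f x - f v = 0 by rewrite e subrr.
  rewrite fdiff; lra.
have fum : f um = f v.
  apply/eqP; rewrite -subr_eq0 fdiff /rho invf_div divfK ?addNr //.
  by rewrite gt_eqF.
pose G x := [&& x \in F, f x == f v & x != v].
have Gum : G um by rewrite /G umF fum eqxx umv.
case: (@arg_maxP _ R _ um G (fun x => pp v x) Gum) => u0 /and3P[u0F /eqP fu0 u0v] maxu0.
pose K := 1 + \sum_(x in F | f x != f v) (((4 * n)%:R + 1) / (f v - f x)).
have Kge : forall x, x \in F -> f x != f v -> (4 * n)%:R + 1 <= K * f v - K * f x.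
  move=> x xF fx.
  have gap : 0 < f v - f x by rewrite subr_gt0 lt_neqAle fx le1.
  have h : ((4 * n)%:R + 1) / (f v - f x) <= K - 1.
    rewrite /K addrAC subrr add0r (bigD1 x) /=; last by rewrite xF fx.
    rewrite lerDl; apply: sumr_ge0 => y /andP[/andP[yF fy] _].
    apply: divr_ge0; first by apply: addr_ge0 => //; apply: ler0n.
    by rewrite subr_ge0 le1.
  move: h; rewrite ler_pdivrMr // mulrBl mul1r -mulrBr.
  set g := f v - f x in gap *; lra.
pose W := fun j => K * W1 j + (E v j + E u0 j).
have WE : forall x, dotv W (E x) = K * f x + (pp v x + pp u0 x).
  by move=> x; rewrite /W dotvDl dotvZl -/(f x) dotvDl.
exists u0; last first.
  have := eq1 u0 u0F u0v fu0; rewrite /Bc subr_gt0 //.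
split => //; first by rewrite eq_sym.
exists W; split.
- by rewrite !WE fu0 !pp_refl // (pp_sym u0 v) [n%:R + _]addrC.
- move=> B BF; rewrite !WE pp_refl // (pp_sym u0 v).
  have := pp_bounds BF vF; have := pp_bounds BF u0F.
  have := pp_bounds vF u0F; rewrite (pp_sym B v) (pp_sym B u0).
  move=> /andP[? ?] /andP[? ?] /andP[? ?].
  case: (eqVneq (f B) (f v)) => fB.
    case: (eqVneq B v) => [->|Bv]; first by rewrite pp_refl // (pp_sym u0 v); lra.
    have : pp v B <= pp v u0 by apply: maxu0; rewrite /G BF fB eqxx Bv.
    rewrite fB; lra.
  have := Kge B BF fB; lra.
- move=> B BF; rewrite !WE pp_refl // (pp_sym u0 v) => e.
  have := pp_bounds BF vF; have := pp_bounds BF u0F.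
  have := pp_bounds vF u0F; rewrite (pp_sym B v) (pp_sym B u0).
  move=> /andP[? ?] /andP[? ?] /andP[? ?].
  case: (eqVneq (f B) (f v)) => fB.
    case: (eqVneq B v) => [->|Bv]; first by left.
    case: (eqVneq B u0) => [->|Bu0]; first by right.
    have : pp v B <= pp v u0 by apply: maxu0; rewrite /G BF fB eqxx Bv.
    have : pp u0 B < n%:R by apply: pp_lt => //; rewrite eq_sym.
    have e2 : K * f B = K * f v by rewrite fB.
    move=> h1 h2; exfalso; lra.
  have := Kge B BF fB; have := ler0n R n; have : (4 * n)%:R = 4 * n%:R :> R by rewrite natrM.
  move=> h3 h4 h5. have X1 : pp v B + pp u0 B - n%:R - pp v u0 <= 2 * n%:R by lra.
 have X2 : K * f v - K * f B = pp v B + pp u0 B - n%:R - pp v u0 by lra.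
 exfalso; lra.
Qed.

End LI.



Theorem proposition2p8 (R : realFieldType) (n : nat) (F : {set {set elt n}})
    (S : {set elt n}) :
  @delta_matroid R n F -> admissible S -> #|S| = n ->
  forall T : {set elt n}, T \subset S ->
    ((rkM F S T)%:R : rat) = ((gD F T)%:~R + (#|T|)%:R) / 2.
Proof.
move=> [F0 hF hE] admS cS T TS.
pose a B := #|T :&: B|.
pose b B := #|S :&: B|.
have bn : forall B, (b B <= n)%N.
  by move=> B; apply: (leq_trans (subset_leq_card (subsetIl S B))); rewrite cS.
have aT : forall B, (a B <= #|T|)%N.
  by move=> B; apply: (subset_leq_card (subsetIl T B)).
have Tn : (#|T| <= n)%N by apply: (leq_trans (subset_leq_card TS)); rewrite cS.
have Fpos : (0 < #|F|)%N by rewrite card_gt0.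
pose phi B := (a B * n.+1 + b B)%N.
have [Bs BsF Bsmax] := eq_bigmax_cond phi Fpos.
have phile : forall B, B \in F -> (phi B <= phi Bs)%N.
  by move=> B BF; rewrite -Bsmax; exact: leq_bigmax_cond.
have amax : forall B, B \in F -> (a B <= a Bs)%N.
  move=> B BF; have := phile B BF; have := bn B; have := bn Bs; rewrite /phi; nia.
have bmax : forall B, B \in F -> a B = a Bs -> (b B <= b Bs)%N.
  move=> B BF e; have := phile B BF; rewrite /phi e; lia.
have Ebn : forall B, B \in F ->
    dotv (@e_set R n S) (e_set B) = 2 * (b B)%:R - n%:R.
  by move=> B /hF [aB cB]; rewrite dot_full // cS.
have ETn : forall B, B \in F ->
    dotv (@e_set R n T) (e_set B) = 2 * (a B)%:R - (#|T|)%:R.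
  by move=> B /hF [aB cB]; rewrite dot_full.
have bS : b Bs = rS F S.
  apply/eqP; rewrite eqn_leq; apply/andP; split.
    by apply: (@leq_bigmax_cond _ (mem F) (fun B => #|S :&: B|)).
  rewrite leqNgt; apply/negP => lt.
  have [B1 B1F B1max] := eq_bigmax_cond (fun B => #|S :&: B|) Fpos.
  move: lt; rewrite /rS B1max => lt.
  have ex : exists2 u, u \in F & dotv (@e_set R n S) (e_set Bs) < dotv (e_set S) (e_set u).
    exists B1 => //; rewrite !Ebn //.
    have : (b Bs)%:R < (#|S :&: B1|)%:R :> R by rewrite ltr_nat.
    rewrite /b; lra.
  have [u edge hlt] := @LI R n F hF Bs (e_set S) BsF ex.
  have gd := hE _ _ edge.
  have [_ uF _ _] := edge.
  have [aBs cBs] := hF _ BsF; have [au cu] := hF _ uF.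
  have := edge_lemma admS cS TS aBs cBs au cu gd hlt.
  rewrite !ETn // => h.
  have hau : (a Bs <= a u)%N.
    have : (a Bs)%:R <= (a u)%:R :> R by lra.
    by rewrite ler_nat.
  have eau : a u = a Bs by apply/eqP; rewrite eqn_leq amax.
  have := bmax u uF eau.
  move: hlt; rewrite !Ebn // => hlt.
  have : (b Bs)%:R < (b u)%:R :> R by lra.
  by rewrite ltr_nat => /leq_trans H /H; rewrite ltnn.
have rkE : rkM F S T = a Bs.
  apply/eqP; rewrite eqn_leq; apply/andP; split.
    apply/bigmax_leqP => X /imsetP [B hB ->].
    move: hB; rewrite inE => /andP [BF _].
    by rewrite setIA (setIidPl TS); apply: amax.
  have : S :&: Bs \in basesM F S.
    by apply/imsetP; exists Bs => //; rewrite inE BsF -bS eqxx.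
  move=> /(@leq_bigmax_cond _ (mem (basesM F S)) (fun X => #|T :&: X|)).
  by rewrite setIA (setIidPl TS).
have termE : forall B, B \in F ->
    ((#|T :&: B|)%:Z - (#|barset T :&: B|)%:Z) = 2 * (a B)%:Z - (#|T|)%:Z.
  move=> B /hF [aB cB]; rewrite card_barI //.
  have := aT B; rewrite /a; lia.
have gDE : gD F T = 2 * (a Bs)%:Z - (#|T|)%:Z.
  apply/le_anti/andP; split.
    apply: bigmax_le.
      have := aT Bs; lia.
    move=> B BF; rewrite termE //.
    have := amax B BF; lia.
  rewrite -termE //.
  rewrite /gD; exact: (le_bigmax_cond _ (fun B => (#|T :&: B|)%:Z - (#|barset T :&: B|)%:Z) BsF).
rewrite rkE gDE intrB intrM /=.
have -> : (2%:~R : rat) = 2 by [].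
rewrite -!pmulrn.
by field.
Qed.
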